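(* Let $\sigma_0,\sigma_\epsilon>0$ with $\sigma_0\neq\sigma_\epsilon$, and $\theta_0\in\mathbb{R}$. Let the prior be $\Theta\sim\mathrm{Laplace}(\theta_0,\sigma_0)$ and the signal $X=\Theta+\epsilon$ with $\epsilon\sim\mathrm{Laplace}(0,\sigma_\epsilon)$ independent of $\Theta$. Put $x_0=x-\theta_0$, $a_0=1/\sigma_0$, $a_\epsilon=1/\sigma_\epsilon$, $x^*=\frac{2a_0}{a_\epsilon^2-a_0^2}$. Then the posterior mean $\theta_1=\mathbb{E}[\Theta\mid X=x]$ is $$\theta_1=\theta_0+\operatorname{sgn}(x_0)\,\frac{a_\epsilon}{a_\epsilon e^{(a_\epsilon-a_0)|x_0|}-a_0}\Bigl((|x_0|-x^* )e^{(a_\epsilon-a_0)|x_0|}+x^*\Bigr).$$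
   Context: $\mathrm{Laplace}(\mu,s)$ has density $t\mapsto\frac{1}{2s}e^{-|t-\mu|/s}$. The posterior mean is $\theta_1=\frac{\int\theta f_\Theta(\theta)l_\epsilon(x-\theta)d\theta}{\int f_\Theta(\theta)l_\epsilon(x-\theta)d\theta}$ with $f_\Theta,l_\epsilon$ the prior and noise densities. *)

(* Defs.v *)
From mathcomp Require Import all_boot all_order all_algebra.
From mathcomp Require Import all_classical all_reals all_analysis.
Set Implicit Arguments. Unset Strict Implicit. Unset Printing Implicit Defensive.
Import Order.TTheory GRing.Theory Num.Theory.
Local Open Scope ring_scope.
Local Open Scope classical_set_scope.

Definition laplace_pdf {R : realType} (mu s : R) (t : R) : R :=
  (2 * s)^-1 * expR (- (`|t - mu| / s)).

(* Posterior mean of Theta given X = x, where X = Theta + eps with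
   prior density fTheta and independent noise density leps:
   theta_1 = (int theta fTheta(theta) leps(x-theta) dtheta)
           / (int fTheta(theta) leps(x-theta) dtheta),
   integrals over R w.r.t. Lebesgue measure. *)
Definition posterior_mean {R : realType} (fTheta leps : R -> R) (x : R) : R :=
  Rintegral (@lebesgue_measure R) setT (fun th => th * fTheta th * leps (x - th))
  / Rintegral (@lebesgue_measure R) setT (fun th => fTheta th * leps (x - th)).

(* Main.v *)
Require Import Defs.
From mathcomp Require Import all_boot all_order all_algebra.
From mathcomp Require Import all_classical all_reals all_analysis.
From mathcomp Require Import measurable_realfun.
From mathcomp Require Import ring lra.
Set Implicit Arguments. Unset Strict Implicit. Unset Printing Implicit Defensive.
Import Order.TTheory GRing.Theory Num.Theory.
Import numFieldNormedType.Exports.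
Local Open Scope ring_scope.
Local Open Scope classical_set_scope.

Section S.
Context {R : realType}.
Notation mu := (@lebesgue_measure R).

Lemma der_lin (g p t : R) : is_derive t 1 (fun t => g * (t - p)) g.
Proof.
have h : is_derive t 1 (g \*: (id - cst p)) (g *: (1 - 0)).
  apply: is_deriveZ; apply: is_deriveB.
rewrite subr0 /GRing.scale /= mulr1 in h.
exact: h.
Qed.

Lemma der_aff (al be t : R) : is_derive t 1 (fun t => al * t + be) al.
Proof.
have h := der_lin al (- be / al) t.
have [->|a0] := eqVneq al 0.
  have -> : (fun t : R => 0 * t + be) = cst be by apply/funext => y; rewrite mul0r add0r.
  exact: is_derive_cst.
have -> : (fun t : R => al * t + be) = (fun t => al * (t - (- be / al))).
  by apply/funext => y; field.
exact: h.
Qed.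

Definition Fe (g p al be : R) (t : R) := expR (g * (t - p)) * (al * t + be).

Lemma der_F (g p al be t : R) :
  is_derive t 1 (Fe g p al be) (Fe g p (g * al) (g * be + al) t).
Proof.
have h1 : is_derive t 1 (fun t => expR (g * (t - p))) (expR (g * (t - p)) * g).
  exact: (is_derive1_comp (is_derive_expR _) (der_lin g p t)).
have h := is_deriveM h1 (der_aff al be t).
rewrite (_ : Fe g p al be =
  (fun t => expR (g * (t - p))) * (fun t => al * t + be)); last first.
  by apply/funext => y.
have E : expR (g * (t - p)) *: al + (al * t + be) *: (expR (g * (t - p)) * g) =
  Fe g p (g * al) (g * be + al) t by rewrite /Fe /GRing.scale /=; ring.
exact (is_derive_eq h E).
Qed.

Definition antiF (g p al be : R) := Fe g p (al / g) ((be - al / g) / g).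

Lemma der_anti (g p al be t : R) : g != 0 ->
  is_derive t 1 (antiF g p al be) (Fe g p al be t).
Proof.
move=> g0.
have E : Fe g p (g * (al / g)) (g * ((be - al / g) / g) + al / g) t = Fe g p al be t.
  by rewrite /Fe; congr (_ * _); field.
exact (is_derive_eq (der_F g p (al / g) ((be - al / g) / g) t) E).
Qed.

Lemma facts (F f : R -> R) : (forall t : R, is_derive t (1:R) F (f t)) ->
  [/\ forall t : R, derivable F t 1, continuous F & forall t, F^`() t = f t].
Proof.
move=> H; split.
- by move=> t; exact: ex_derive.
- move=> t; apply: differentiable_continuous.
  by apply/derivable1_diffP; exact: ex_derive.
- by move=> t; rewrite derive1E derive_val.
Qed.

Lemma Fe_cont g p al be : continuous (Fe g p al be).
Proof. by have [] := facts (der_F g p al be). Qed.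

Lemma decay (h : R -> R) p K : 0 <= K ->
  (forall t, p < t -> 0 <= h t <= K / (t - p)) -> h x @[x --> +oo%R] --> 0.
Proof.
move=> K0 hb; apply/cvgrPdist_le => eps e0.
near=> t.
have tp : p < t by near: t; apply: nbhs_pinfty_gt; exact: num_real.
have tK : p + K / eps <= t by near: t; apply: nbhs_pinfty_ge; exact: num_real.
rewrite sub0r normrN; have /andP[h0 hle] := hb t tp; rewrite ger0_norm //.
apply: le_trans hle _.
rewrite ler_pdivrMr ?subr_gt0 //.
rewrite mulrC -ler_pdivrMr //; lra.
Unshelve. all: by end_near.
Qed.

Lemma exp_bound1 (y : R) : 0 < y -> 0 <= expR (- y) <= 1 / y.
Proof.
move=> y0; rewrite expR_ge0 /= expRN div1r lef_pV2 ?posrE ?expR_gt0 //.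
have := expR_ge1Dx y; lra.
Qed.

Lemma exp_bound2 (y : R) : 0 < y -> 0 <= y * expR (- y) <= 2 / y.
Proof.
move=> y0; apply/andP; split; first by rewrite mulr_ge0 ?expR_ge0 ?ltW.
rewrite expRN.
have h := @expR_ge1Dxn R y 1 (ltW y0).
have e0 := expR_gt0 y.
rewrite ler_pdivrMr // mulrAC ler_pdivlMr //.
move: h; rewrite (_ : (2`!)%:R = 2 :> R); last by rewrite factE.
rewrite expr2 => h; nra.
Qed.

Lemma Fe_lim (c p A B : R) : 0 < c -> Fe (- c) p A B x @[x --> +oo%R] --> 0.
Proof.
move=> c0.
have l1 : (fun x => (x - p) * expR (- c * (x - p))) x @[x --> +oo%R] --> 0.
  apply: (@decay _ p (2 / c ^+ 2)); first by rewrite divr_ge0 // ?exprn_ge0 // ltW.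
  move=> t pt; have y0 : 0 < c * (t - p) by rewrite mulr_gt0 // subr_gt0.
  have /andP[h1 h2] := exp_bound2 y0.
  rewrite mulNr.
  have -> : (t - p) * expR (- (c * (t - p))) = c^-1 * (c * (t - p) * expR (- (c * (t - p)))).
    by field; rewrite gt_eqF //.
  apply/andP; split; first by rewrite mulr_ge0 // invr_ge0 ltW.
  apply: le_trans (ler_wpM2l _ h2) _; first by rewrite invr_ge0 ltW.
  rewrite le_eqVlt; apply/orP; left; apply/eqP; field; rewrite subr_eq0; apply/andP; split; rewrite gt_eqF //.
have l2 : (fun x => expR (- c * (x - p))) x @[x --> +oo%R] --> 0.
  apply: (@decay _ p (1 / c)); first by rewrite divr_ge0 // ltW.
  move=> t pt; have y0 : 0 < c * (t - p) by rewrite mulr_gt0 // subr_gt0.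
  have /andP[h1 h2] := exp_bound1 y0.
  rewrite mulNr; apply/andP; split => //; apply: le_trans h2 _.
  rewrite le_eqVlt; apply/orP; left; apply/eqP; field; rewrite subr_eq0; apply/andP; split; rewrite gt_eqF //.
have H := cvgD (cvgM (cvg_cst A) l1) (cvgM (cvg_cst (A * p + B)) l2).
rewrite !mulr0 addr0 in H.
have -> : Fe (- c) p A B = (fun x => A * ((x - p) * expR (- c * (x - p))) +
   (A * p + B) * expR (- c * (x - p))).
  by apply/funext => x; rewrite /Fe; ring.
exact: H.
Qed.

Lemma rtail_ge0 (c p al be : R) : 0 < c -> (forall t, p <= t -> 0 <= al * t + be) ->
  (\int[mu]_(t in `[p, +oo[) (Fe (- c) p al be t)%:E = (- antiF (- c) p al be p)%:E)%E.
Proof.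
move=> c0 H.
have cn : - c != 0 by rewrite oppr_eq0 gt_eqF.
have [dF cF eF] := facts (fun t => der_anti p al be t cn).
rewrite (@ge0_continuous_FTC2y R (Fe (- c) p al be) (antiF (- c) p al be) p 0).
- by rewrite -EFinB sub0r.
- by move=> t pt; rewrite /Fe mulr_ge0 ?expR_ge0 // H.
- by apply: continuous_subspaceT; exact: Fe_cont.
- exact: Fe_lim.
- by move=> t _; exact: dF.
- by apply: cvg_at_right_filter; exact: cF.
- by move=> t _; exact: eF.
Qed.

Lemma ltail_ge0 (c p al be : R) : 0 < c -> (forall t, t <= p -> 0 <= al * t + be) ->
  (\int[mu]_(t in `]-oo, p]) (Fe c p al be t)%:E =
     (- antiF (- c) (- p) (- al) be (- p))%:E)%E.
Proof.
move=> c0 H.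
have := @ge0_integration_by_substitutionNy R (Fe c p al be) (- p).
rewrite opprK => ->.
- rewrite -(rtail_ge0 c0); last by move=> t pt; rewrite mulNr -mulrN H // lerNl.
  apply: eq_integral => t _; congr EFin; rewrite /Fe /=; congr (expR _ * _); ring.
- by apply: continuous_subspaceT; exact: Fe_cont.
- by move=> t; rewrite in_itv /= => tp; rewrite /Fe mulr_ge0 ?expR_ge0 // H // ltW.
Qed.

Definition IV (D : set R) (f : R -> R) (v : R) :=
  mu.-integrable D (EFin \o f) /\ (\int[mu]_(t in D) (f t)%:E = v%:E)%E.

Lemma IV_ge0 (D : set R) (f : R -> R) (v : R) : measurable D -> continuous f -> (forall t, D t -> 0 <= f t) ->
  (\int[mu]_(t in D) (f t)%:E = v%:E)%E -> IV D f v.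
Proof.
move=> mD cf f0 Hv; split => //; apply/integrableP; split.
  apply/measurable_EFinP; apply: measurable_funTS.
  exact: continuous_measurable_fun.
have -> : (\int[mu]_(t in D) `|(EFin \o f) t|)%E = (\int[mu]_(t in D) (f t)%:E)%E.
  by apply: eq_integral => t; rewrite inE => Dt /=; rewrite ger0_norm // f0.
by rewrite Hv ltry.
Qed.

Lemma IV_ext (D : set R) (f g : R -> R) (v : R) : measurable (D : set (measurableTypeR R)) ->
  {in D, f =1 g} -> IV D f v -> IV D g v.
Proof.
move=> mD fg [i1 e1]; split.
  by apply: eq_integrable i1 => // t Dt /=; rewrite fg.
by rewrite -e1; apply: eq_integral => t Dt; rewrite fg.
Qed.

Lemma IV_Z (D : set R) (f : R -> R) (v k : R) : measurable (D : set (measurableTypeR R)) -> IV D f v -> IV D (fun t => k * f t) (k * v).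
Proof.
move=> mD [i1 e1]; split.
  have i2 := integrableZl mD k i1.
  apply: (eq_integrable mD _ _ _ i2) => t _ /=; by rewrite EFinM.
under eq_integral do rewrite EFinM.
by rewrite (integralZl mD i1) e1 EFinM.
Qed.

Lemma IV_D (D : set R) (f g : R -> R) (v w : R) : measurable (D : set (measurableTypeR R)) -> IV D f v -> IV D g w ->
  IV D (fun t => f t + g t) (v + w).
Proof.
move=> mD [i1 e1] [i2 e2]; split.
  apply: (eq_integrable mD _ _ _ (integrableD mD i1 i2)) => t _ /=; by rewrite EFinD.
under eq_integral do rewrite EFinD.
by rewrite (integralD mD i1 i2) e1 e2 EFinD.
Qed.

Lemma IV_eqv (D : set R) (f : R -> R) (v w : R) : v = w -> IV D f v -> IV D f w.
Proof. by move=> ->. Qed.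

Lemma mid_IV (g p al be a b : R) : g != 0 -> a <= b ->
  IV `[a, b] (Fe g p al be) (antiF g p al be b - antiF g p al be a).
Proof.
move=> g0 ab.
have [dF cF eF] := facts (fun t => der_anti p al be t g0).
split.
  apply: continuous_compact_integrable; first exact: segment_compact.
  by apply: continuous_subspaceT; exact: Fe_cont.
move: ab; rewrite le_eqVlt => /predU1P[<-|ab].
  by rewrite set_itv1 integral_set1 subrr.
rewrite (@continuous_FTC2 R (Fe g p al be) (antiF g p al be) a b ab).
- by rewrite EFinB.
- by apply: continuous_subspaceT; exact: Fe_cont.
- split.
  + by move=> t _; exact: dF.
  + by apply: cvg_at_right_filter; exact: cF.
  + by apply: cvg_at_left_filter; exact: cF.
- by move=> t _; exact: eF.
Qed.

Lemma RT0 (c p : R) : 0 < c -> IV `[p, +oo[ (Fe (- c) p 0 1) (1 / c).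
Proof.
move=> c0; apply: IV_ge0.
- exact: measurable_itv.
- exact: Fe_cont.
- by move=> t _; rewrite /Fe mulr_ge0 ?expR_ge0 // mul0r add0r.
- rewrite rtail_ge0 //; last by move=> t _; rewrite mul0r add0r.
  congr EFin; rewrite /antiF /Fe subrr mulr0 expR0; field; rewrite gt_eqF //.
Qed.

Lemma RT1 (c p : R) : 0 < c -> IV `[p, +oo[ (Fe (- c) p 1 0) (1 / c ^+ 2 + p / c).
Proof.
move=> c0.
have h1 : IV `[p, +oo[ (Fe (- c) p 1 (- p)) (1 / c ^+ 2).
  apply: IV_ge0.
  - exact: measurable_itv.
  - exact: Fe_cont.
  - by move=> t /=; rewrite in_itv /= andbT => pt; rewrite /Fe mulr_ge0 ?expR_ge0 // mul1r subr_ge0.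
  - rewrite rtail_ge0 //; last by move=> t pt; rewrite mul1r subr_ge0.
    congr EFin; rewrite /antiF /Fe subrr mulr0 expR0; field; rewrite gt_eqF //.
have := IV_D (measurable_itv _) h1 (IV_Z p (measurable_itv _) (RT0 p c0)).
move=> h; apply: IV_eqv (IV_ext (measurable_itv _) _ h).
  by rewrite mulrC mul1r.
by move=> t _; rewrite /Fe; ring.
Qed.

Lemma LT0 (c p : R) : 0 < c -> IV `]-oo, p] (Fe c p 0 1) (1 / c).
Proof.
move=> c0; apply: IV_ge0.
- exact: measurable_itv.
- exact: Fe_cont.
- by move=> t _; rewrite /Fe mulr_ge0 ?expR_ge0 // mul0r add0r.
- rewrite ltail_ge0 //; last by move=> t _; rewrite mul0r add0r.
  congr EFin; rewrite /antiF /Fe subrr mulr0 expR0; field; rewrite gt_eqF //.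
Qed.

Lemma LT1 (c p : R) : 0 < c -> IV `]-oo, p] (Fe c p 1 0) (p / c - 1 / c ^+ 2).
Proof.
move=> c0.
have h1 : IV `]-oo, p] (Fe c p (- 1) p) (1 / c ^+ 2).
  apply: IV_ge0.
  - exact: measurable_itv.
  - exact: Fe_cont.
  - by move=> t /=; rewrite in_itv /= => pt; rewrite /Fe mulr_ge0 ?expR_ge0 // mulN1r addrC subr_ge0.
  - rewrite ltail_ge0 //; last by move=> t pt; rewrite mulN1r addrC subr_ge0.
    congr EFin; rewrite /antiF /Fe subrr mulr0 expR0; field; rewrite gt_eqF //.
have := IV_D (measurable_itv _) (IV_Z p (measurable_itv _) (LT0 p c0))
   (IV_Z (- 1) (measurable_itv _) h1).
move=> h; apply: IV_eqv (IV_ext (measurable_itv _) _ h).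
  by ring.
by move=> t _; rewrite /Fe; ring.
Qed.

Lemma split3 (f : R -> R) (m M : R) : m <= M -> continuous f ->
  (\int[mu]_(t in setT) (f t)%:E = \int[mu]_(t in `]-oo, m]) (f t)%:E +
     \int[mu]_(t in `[m, M]) (f t)%:E + \int[mu]_(t in `[M, +oo[) (f t)%:E)%E.
Proof.
move=> mM cf.
have mf : measurable_fun setT (EFin \o f).
  by apply/measurable_EFinP; exact: continuous_measurable_fun.
rewrite -(itv_setU_setT false M).
rewrite integral_setU; [|exact: measurable_itv|exact: measurable_itv|
  by rewrite itv_setU_setT|exact: disjoint_rays].
rewrite (@itv_bndbnd_setU _ _ _ (BRight m)); last 2 first.
- by [].
- by rewrite bnd_simp.
rewrite integral_setU; [|exact: measurable_itv|exact: measurable_itv|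
  exact: measurable_funTS|]; last first.
  apply/disj_setPS => t [] /=; rewrite !in_itv /= => tm /andP[mt _].
  by move: (lt_le_trans mt tm); rewrite ltxx.
rewrite integral_itv_obnd_cbnd; last exact: measurable_funTS.
rewrite integral_itv_obnd_cbnd; last exact: measurable_funTS.
by [].
Qed.

Lemma contE (th0 x a0 ae : R) :
  continuous (fun th => - (`|th - th0| * a0) - `|x - th| * ae).
Proof.
move=> t.
apply: cvgB; first apply: cvgN.
  apply: (cvgMr_tmp (f := fun y => `|y - th0|)).
  apply: (cvg_norm (f := fun y => y - th0)); apply: cvgB; [exact: cvg_id|exact: cvg_cst].
apply: (cvgMr_tmp (f := fun y => `|x - y|)).
apply: (cvg_norm (f := fun y => x - y)); apply: cvgB; [exact: cvg_cst|exact: cvg_id].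
Qed.

Lemma contG (th0 x a0 ae k : R) :
  continuous (fun th => k * expR (- (`|th - th0| * a0) - `|x - th| * ae)).
Proof.
move=> t; apply: (cvgMl_tmp (g := fun th => expR (- (`|th - th0| * a0) - `|x - th| * ae))).
have h := continuous_comp (@contE th0 x a0 ae t) (@continuous_expR R _).
exact h.
Qed.

Lemma contNG (th0 x a0 ae k : R) :
  continuous (fun th : R => th * (k * expR (- (`|th - th0| * a0) - `|x - th| * ae))).
Proof.
move=> t; apply: cvgM; [exact: cvg_id| exact: contG].
Qed.

Definition ex (th0 x a0 ae th : R) := - (`|th - th0| * a0) - `|x - th| * ae.

Lemma pw (k C g p t u : R) : u = C + g * (t - p) ->
  k * expR C * Fe g p 0 1 t = k * expR u /\ k * expR C * Fe g p 1 0 t = t * (k * expR u).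
Proof. by move=> ->; rewrite /Fe expRD; split; ring. Qed.

Lemma piece (D : set R) (C g p k v0 v1 : R) (u : R -> R) :
  measurable (D : set (measurableTypeR R)) ->
  (forall t, t \in D -> u t = C + g * (t - p)) ->
  IV D (Fe g p 0 1) v0 -> IV D (Fe g p 1 0) v1 ->
  (\int[mu]_(t in D) (k * expR (u t))%:E = (k * expR C * v0)%:E)%E /\
  (\int[mu]_(t in D) (t * (k * expR (u t)))%:E = (k * expR C * v1)%:E)%E.
Proof.
move=> mD H I0 I1; split.
  have e : {in D, (fun t => k * expR C * Fe g p 0 1 t) =1 (fun t => k * expR (u t))}.
    by move=> t tD; case: (pw k (H t tD)).
  by have [_ ->] := IV_ext mD e (IV_Z (k * expR C) mD I0).
have e : {in D, (fun t => k * expR C * Fe g p 1 0 t) =1 (fun t => t * (k * expR (u t)))}.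
  by move=> t tD; case: (pw k (H t tD)).
by have [_ ->] := IV_ext mD e (IV_Z (k * expR C) mD I1).
Qed.

Lemma den_ne0 (a0 ae d : R) : 0 < a0 -> 0 < ae -> a0 != ae -> 0 <= d ->
  ae * expR ((ae - a0) * d) - a0 != 0.
Proof.
move=> a0p aep ane d0.
case: (ltrgtP a0 ae) ane => // h _.
- have h1 : 1 <= expR ((ae - a0) * d).
    by rewrite -expR0 ler_expR mulr_ge0 // subr_ge0 ltW.
  have := ler_wpM2l (ltW aep) h1; rewrite mulr1 => h2.
  by rewrite gt_eqF // subr_gt0 (lt_le_trans h).
- have h1 : expR ((ae - a0) * d) <= 1.
    by rewrite -expR0 ler_expR mulr_le0_ge0 // subr_le0 ltW.
  have := ler_wpM2l (ltW aep) h1; rewrite mulr1 => h2.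
  by rewrite lt_eqF // subr_lt0 (le_lt_trans h2).
Qed.

Lemma contGe (th0 x a0 ae k : R) : continuous (fun th => k * expR (ex th0 x a0 ae th)).
Proof. exact: contG. Qed.

Lemma contNGe (th0 x a0 ae k : R) :
  continuous (fun th : R => th * (k * expR (ex th0 x a0 ae th))).
Proof. exact: contNG. Qed.

Lemma key1 (a0 ae th0 x k : R) : 0 < a0 -> 0 < ae -> a0 != ae -> 0 < k -> th0 <= x ->
  Rintegral mu setT (fun th => th * (k * expR (ex th0 x a0 ae th))) /
  Rintegral mu setT (fun th => k * expR (ex th0 x a0 ae th)) =
  th0 + Num.sg (x - th0) * (ae / (ae * expR ((ae - a0) * `|x - th0|) - a0)) *
      ((`|x - th0| - 2 * a0 / (ae ^+ 2 - a0 ^+ 2)) * expR ((ae - a0) * `|x - th0|)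
        + 2 * a0 / (ae ^+ 2 - a0 ^+ 2)).
Proof.
move=> a0p aep ane kp hx.
have sp : 0 < a0 + ae by rewrite addr_gt0.
have gne : ae - a0 != 0 by rewrite subr_eq0 eq_sym.
have xsn : ae ^+ 2 - a0 ^+ 2 != 0.
  by rewrite subr_sqr mulf_neq0 // gt_eqF // addr_gt0.
have eL : forall t, t \in `]-oo, th0] ->
    ex th0 x a0 ae t = - (ae * (x - th0)) + (a0 + ae) * (t - th0).
  move=> t; rewrite inE /= in_itv /= => tle; rewrite /ex.
  rewrite ler0_norm ?subr_le0 // ger0_norm ?subr_ge0 ?(le_trans tle hx) //; ring.
have eM : forall t, t \in `[th0, x] ->
    ex th0 x a0 ae t = - (ae * (x - th0)) + (ae - a0) * (t - th0).
  move=> t; rewrite inE /= in_itv /= => /andP[h1 h2]; rewrite /ex.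
  rewrite ger0_norm ?subr_ge0 // ger0_norm ?subr_ge0 //; ring.
have eR : forall t, t \in `[x, +oo[ ->
    ex th0 x a0 ae t = - (a0 * (x - th0)) + - (a0 + ae) * (t - x).
  move=> t; rewrite inE /= in_itv /= andbT => h; rewrite /ex.
  rewrite ger0_norm ?subr_ge0 ?(le_trans hx h) // ler0_norm ?subr_le0 //; ring.
have [dL nL] := piece k (measurable_itv _) eL (LT0 th0 sp) (LT1 th0 sp).
have [dM nM] := piece k (measurable_itv _) eM (mid_IV th0 0 1 gne hx) (mid_IV th0 1 0 gne hx).
have [dR nR] := piece k (measurable_itv _) eR (RT0 x sp) (RT1 x sp).
rewrite /Rintegral (split3 hx (@contNGe th0 x a0 ae k)) (split3 hx (@contGe th0 x a0 ae k)).
rewrite dL dM dR nL nM nR -!EFinD /=.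
have s0 : a0 + ae != 0 by rewrite gt_eqF.
have k0 : k != 0 by rewrite gt_eqF.
move: hx; rewrite le_eqVlt => /predU1P[xe|xgt].
  subst x; rewrite /antiF /Fe !subrr !mulr0 ?oppr0 !expR0 sgr0 !mul0r addr0.
  by field; rewrite s0 /= gt_eqF // addr_gt0.
have d0 : 0 < x - th0 by rewrite subr_gt0.
rewrite /antiF /Fe (subrr th0) mulr0 expR0 (gtr0_norm d0).
rewrite (gtr0_sg d0) mul1r.
have hA : expR (- (a0 * (x - th0))) =
    expR ((ae - a0) * (x - th0)) * expR (- (ae * (x - th0))).
  by rewrite -expRD; congr expR; ring.
rewrite hA.
have Ene := @den_ne0 a0 ae (x - th0) a0p aep ane (ltW d0).
have B0 : expR (- (ae * (x - th0))) != 0 by rewrite gt_eqF // expR_gt0.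
move: Ene B0.
set E := expR ((ae - a0) * (x - th0)).
set B := expR (- (ae * (x - th0))).
move=> Ene B0.
field; rewrite xsn Ene s0 gne /=.
have -> : k * B * (ae - a0) + k * B * (E - 1) * (a0 + ae) + k * (E * B) * (ae - a0) =
  k * B * 2 * (ae * E - a0) by ring.
by rewrite !mulf_neq0 // pnatr_eq0.
Qed.

Lemma key2 (a0 ae th0 x k : R) : 0 < a0 -> 0 < ae -> a0 != ae -> 0 < k -> x < th0 ->
  Rintegral mu setT (fun th => th * (k * expR (ex th0 x a0 ae th))) /
  Rintegral mu setT (fun th => k * expR (ex th0 x a0 ae th)) =
  th0 + Num.sg (x - th0) * (ae / (ae * expR ((ae - a0) * `|x - th0|) - a0)) *
      ((`|x - th0| - 2 * a0 / (ae ^+ 2 - a0 ^+ 2)) * expR ((ae - a0) * `|x - th0|)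
        + 2 * a0 / (ae ^+ 2 - a0 ^+ 2)).
Proof.
move=> a0p aep ane kp hx.
have hx' := ltW hx.
have sp : 0 < a0 + ae by rewrite addr_gt0.
have gne : a0 - ae != 0 by rewrite subr_eq0.
have gne' : ae - a0 != 0 by rewrite subr_eq0 eq_sym.
have xsn : ae ^+ 2 - a0 ^+ 2 != 0.
  by rewrite subr_sqr mulf_neq0 // gt_eqF // addr_gt0.
have eL : forall t, t \in `]-oo, x] ->
    ex th0 x a0 ae t = - (a0 * (th0 - x)) + (a0 + ae) * (t - x).
  move=> t; rewrite inE /= in_itv /= => tle; rewrite /ex.
  rewrite ler0_norm ?subr_le0 ?(le_trans tle hx') // ger0_norm ?subr_ge0 //; ring.
have eM : forall t, t \in `[x, th0] ->
    ex th0 x a0 ae t = - (ae * (th0 - x)) + (a0 - ae) * (t - th0).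
  move=> t; rewrite inE /= in_itv /= => /andP[h1 h2]; rewrite /ex.
  rewrite ler0_norm ?subr_le0 // ler0_norm ?subr_le0 //; ring.
have eR : forall t, t \in `[th0, +oo[ ->
    ex th0 x a0 ae t = - (ae * (th0 - x)) + - (a0 + ae) * (t - th0).
  move=> t; rewrite inE /= in_itv /= andbT => h; rewrite /ex.
  rewrite ger0_norm ?subr_ge0 // ler0_norm ?subr_le0 ?(le_trans hx' h) //; ring.
have [dL nL] := piece k (measurable_itv _) eL (LT0 x sp) (LT1 x sp).
have [dM nM] := piece k (measurable_itv _) eM (mid_IV th0 0 1 gne hx') (mid_IV th0 1 0 gne hx').
have [dR nR] := piece k (measurable_itv _) eR (RT0 th0 sp) (RT1 th0 sp).
rewrite /Rintegral (split3 hx' (@contNGe th0 x a0 ae k)) (split3 hx' (@contGe th0 x a0 ae k)).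
rewrite dL dM dR nL nM nR -!EFinD /=.
have s0 : a0 + ae != 0 by rewrite gt_eqF.
have k0 : k != 0 by rewrite gt_eqF.
have d0 : x - th0 < 0 by rewrite subr_lt0.
rewrite /antiF /Fe (subrr th0) mulr0 expR0 (ltr0_norm d0) (ltr0_sg d0) opprB.
have hE : expR ((a0 - ae) * (x - th0)) = expR ((ae - a0) * (th0 - x)).
  by congr expR; ring.
have hA : expR (- (a0 * (th0 - x))) =
    expR ((ae - a0) * (th0 - x)) * expR (- (ae * (th0 - x))).
  by rewrite -expRD; congr expR; ring.
rewrite hE hA.
have d1 : 0 < th0 - x by rewrite subr_gt0.
have Ene := @den_ne0 a0 ae (th0 - x) a0p aep ane (ltW d1).
have B0 : expR (- (ae * (th0 - x))) != 0 by rewrite gt_eqF // expR_gt0.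
move: Ene B0.
set E := expR ((ae - a0) * (th0 - x)).
set B := expR (- (ae * (th0 - x))).
move=> Ene B0.
field; rewrite xsn Ene s0 gne /=.
have -> : k * (E * B) * (a0 - ae) + k * B * (1 - E) * (a0 + ae) + k * B * (a0 - ae) =
  - (k * B * 2 * (ae * E - a0)) by ring.
by rewrite oppr_eq0 !mulf_neq0 // pnatr_eq0.
Qed.

Lemma key (a0 ae th0 x k : R) : 0 < a0 -> 0 < ae -> a0 != ae -> 0 < k ->
  Rintegral mu setT (fun th => th * (k * expR (ex th0 x a0 ae th))) /
  Rintegral mu setT (fun th => k * expR (ex th0 x a0 ae th)) =
  th0 + Num.sg (x - th0) * (ae / (ae * expR ((ae - a0) * `|x - th0|) - a0)) *
      ((`|x - th0| - 2 * a0 / (ae ^+ 2 - a0 ^+ 2)) * expR ((ae - a0) * `|x - th0|)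
        + 2 * a0 / (ae ^+ 2 - a0 ^+ 2)).
Proof.
move=> a0p aep ane kp.
have [hx|hx] := boolP (th0 <= x).
  exact (key1 a0p aep ane kp hx).
by apply: (key2 a0p aep ane kp); rewrite ltNge.
Qed.

End S.

Theorem mainTheorem11 (R : realType) (sigma0 sigmae theta0 x : R) :
  0 < sigma0 -> 0 < sigmae -> sigma0 != sigmae ->
  let x0 := x - theta0 in
  let a0 := sigma0^-1 in
  let ae := sigmae^-1 in
  let xs := 2 * a0 / (ae ^+ 2 - a0 ^+ 2) in
  posterior_mean (laplace_pdf theta0 sigma0) (laplace_pdf 0 sigmae) x =
    theta0 + Num.sg x0 * (ae / (ae * expR ((ae - a0) * `|x0|) - a0)) *
      ((`|x0| - xs) * expR ((ae - a0) * `|x0|) + xs).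
Proof.
move=> s0p sep sne; cbv zeta.
rewrite /posterior_mean.
set k := (2 * sigma0)^-1 * (2 * sigmae)^-1.
have kp : 0 < k by rewrite mulr_gt0 // invr_gt0 mulr_gt0.
have e1 : (fun th => th * laplace_pdf theta0 sigma0 th * laplace_pdf 0 sigmae (x - th)) =
    (fun th => th * (k * expR (ex theta0 x sigma0^-1 sigmae^-1 th))).
  apply/funext => th; rewrite /laplace_pdf /ex subr0 expRD /k; ring.
have e2 : (fun th => laplace_pdf theta0 sigma0 th * laplace_pdf 0 sigmae (x - th)) =
    (fun th => k * expR (ex theta0 x sigma0^-1 sigmae^-1 th)).
  apply/funext => th; rewrite /laplace_pdf /ex subr0 expRD /k; ring.
rewrite e1 e2.
apply: key => //; try by rewrite invr_gt0.
by rewrite (inj_eq invr_inj).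
Qed.
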